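(* Let $x, y \in \mathbb{Z}$, let $S$ be a finite set of functions $f_i(z) = a_i z + b_i$ with $a_i, b_i \in \mathbb{Z}$ and $a_i \ne 0$, let $k \in \mathbb{Z}\setminus\{0\}$ and $g(z) = z + k$, and put $F = S \cup \{g\}$ and $\mathbf{G} = \{ G : G \text{ is an } S\text{-composition with } G(x) \equiv y \pmod k\}$. Then: (A) If $\mathbf{G} = \emptyset$, then $x \not\xrightarrow{F} y$. (B) If some $G \in \mathbf{G}$ satisfies $\operatorname{sgn}(G(x) - y) \ne \operatorname{sgn}(k)$, then $x \xrightarrow{F} y$. (C) If some $G \in \mathbf{G}$, written $G = f_{e_0} \circ \cdots \circ f_{e_K}$ with $f_{e_i} \in S$, has $a_{e_j} < 0$ for some $j$, then $x \xrightarrow{F} y$. (D) If none of the hypotheses of (A), (B), (C) hold, then $x \not\xrightarrow{F} y$.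
   Context: For a set $S$ of affine functions $\mathbb{Z}\to\mathbb{Z}$, an $S$-composition is a finite tuple $(s_1,\dots,s_K)$ with $K \ge 0$ and each $s_i \in S$, identified with the function $s_K \circ \dots \circ s_1$ (the empty tuple being the identity). We write $x \xrightarrow{S} y$ if there exists an $S$-composition $G$ with $G(x) = y$. $\operatorname{sgn}$ denotes the sign function with values in $\{-1,0,1\}$. *)

(* Defs.v *)
From Stdlib Require Import ZArith List.
Import ListNotations.
Open Scope Z_scope.

Definition aff : Type := (Z * Z)%type.

Definition aff_apply (f : aff) (z : Z) : Z := fst f * z + snd f.

(* The composition (s_1, ..., s_K) is identified with s_K o ... o s_1;
   the empty list is the identity. *)
Definition comp_apply (c : list aff) (x : Z) : Z :=
  fold_left (fun z f => aff_apply f z) c x.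

Definition is_comp (S : list aff) (c : list aff) : Prop :=
  Forall (fun f => In f S) c.

Definition reaches (S : list aff) (x y : Z) : Prop :=
  exists c, is_comp S c /\ comp_apply c x = y.

(* Main.v *)
Require Import Defs.
From Stdlib Require Import ZArith List Lia Classical Bool.
Import ListNotations.
Open Scope Z_scope.

Definition prodA (c : list aff) : Z := fold_right (fun f p => fst f * p) 1 c.

Lemma shift (c : list aff) : forall z d,
  comp_apply c (z + d) = comp_apply c z + d * prodA c.
Proof.
  induction c as [|f c IH]; intros z d; simpl.
  - unfold comp_apply; simpl; lia.
  - unfold comp_apply; simpl. fold (comp_apply c (aff_apply f (z+d))).
    fold (comp_apply c (aff_apply f z)).
    unfold aff_apply at 1.
    replace (fst f * (z + d) + snd f) with (aff_apply f z + d * fst f) by (unfold aff_apply; ring).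
    rewrite IH. ring.
Qed.

Lemma prodA_pos c : Forall (fun f => 0 < fst f) c -> 0 < prodA c.
Proof. induction 1; simpl; nia. Qed.

Lemma comp_app c1 c2 z : comp_apply (c1 ++ c2) z = comp_apply c2 (comp_apply c1 z).
Proof. unfold comp_apply. apply fold_left_app. Qed.

Lemma comp_rep k n : forall z, comp_apply (repeat (1,k) n) z = z + Z.of_nat n * k.
Proof.
  induction n; intros z. unfold comp_apply; simpl; lia.
  unfold comp_apply; cbn [repeat fold_left]. fold (comp_apply (repeat (1,k) n) (aff_apply (1,k) z)).
  rewrite IHn. unfold aff_apply. cbn [fst snd]. rewrite Nat2Z.inj_succ. lia.
Qed.

Definition rm (k : Z) (c : list aff) :=
  filter (fun f => negb (Z.eqb (fst f) 1 && Z.eqb (snd f) k)) c.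

Lemma decomp k c : forall z, exists N,
  comp_apply c z = comp_apply (rm k c) z + k * N /\
  (Forall (fun f => 0 < fst f) (rm k c) -> 0 <= N).
Proof.
  induction c as [|f c IH]; intros z.
  - exists 0. simpl. split; [lia|]. intros; lia.
  - unfold rm; simpl. fold (rm k c).
    destruct (Z.eqb (fst f) 1 && Z.eqb (snd f) k) eqn:E; simpl.
    + apply andb_true_iff in E as [E1 E2]. apply Z.eqb_eq in E1, E2.
      destruct (IH (z + k)) as [N [HN HP]].
      exists (N + prodA (rm k c)).
      unfold comp_apply at 1; simpl. fold (comp_apply c (aff_apply f z)).
      unfold aff_apply. rewrite E1, E2.
      replace (1 * z + k) with (z + k) by ring. rewrite HN, shift.
      split; [ring|]. intros Hf. specialize (HP Hf). pose proof (prodA_pos _ Hf). lia.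
    + destruct (IH (aff_apply f z)) as [N [HN HP]].
      exists N. unfold comp_apply at 1 2; simpl. fold (comp_apply c (aff_apply f z)).
      fold (comp_apply (rm k c) (aff_apply f z)).
      split; [exact HN|]. intros Hf. inversion Hf; auto.
Qed.

Lemma rm_comp k S c : is_comp ((1,k)::S) c -> is_comp S (rm k c).
Proof.
  unfold is_comp, rm. intros H. apply Forall_forall. intros f Hf.
  apply filter_In in Hf as [Hin Hb]. rewrite Forall_forall in H.
  destruct (H f Hin) as [<-|?]; auto. simpl in Hb. rewrite Z.eqb_refl in Hb. discriminate.
Qed.

Lemma last_neg (G : list aff) :
  (exists f, In f G /\ fst f < 0) -> (forall h, In h G -> fst h <> 0) ->
  exists c1 f c2, G = c1 ++ f :: c2 /\ fst f < 0 /\ Forall (fun h => 0 < fst h) c2.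
Proof.
  induction G as [|h G IH]; intros [f [Hf Hn]] Hnz. destruct Hf.
  destruct (classic (exists f, In f G /\ fst f < 0)) as [Hex|Hno].
  - destruct (IH Hex) as [c1 [f' [c2 [E [H1 H2]]]]]. intros; apply Hnz; simpl; auto.
    exists (h :: c1), f', c2. rewrite E. auto.
  - destruct Hf as [<-|Hf]; [|exfalso; apply Hno; eauto].
    exists [], h, G. split; auto. split; auto. apply Forall_forall. intros q Hh.
    assert (fst q <> 0) by (apply Hnz; simpl; auto).
    assert (~ fst q < 0) by (intro; apply Hno; eauto). lia.
Qed.

Lemma comp_in S (n : nat) k c : is_comp S c -> is_comp ((1,k)::S) (c ++ repeat (1,k) n).
Proof.
  unfold is_comp. intros H. apply Forall_app. split.
  - eapply Forall_impl; [|exact H]. simpl; auto.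
  - apply Forall_forall. intros f Hf. apply repeat_spec in Hf. simpl; auto.
Qed.

Theorem mainTheorem4 (x y k : Z) (S : list aff)
  (hS : forall f, In f S -> fst f <> 0) (hk : k <> 0) :
  let F := (1, k) :: S in
  let inG := fun G : list aff => is_comp S G /\ (k | comp_apply G x - y) in
  (* (A) *)
  ((~ exists G, inG G) -> ~ reaches F x y) /\
  (* (B) *)
  ((exists G, inG G /\ Z.sgn (comp_apply G x - y) <> Z.sgn k) -> reaches F x y) /\
  (* (C) *)
  ((exists G, inG G /\ exists f, In f G /\ fst f < 0) -> reaches F x y) /\
  (* (D) *)
  ((exists G, inG G) ->
   (forall G, inG G -> Z.sgn (comp_apply G x - y) = Z.sgn k) ->
   (forall G, inG G -> forall f, In f G -> ~ fst f < 0) ->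
   ~ reaches F x y).
Proof.
  intros F inG. split; [|split; [|split]].
  - intros HnG [c [Hc Hy]]. apply HnG. exists (rm k c). split.
    + apply rm_comp; exact Hc.
    + destruct (decomp k c x) as [N [HN _]]. exists (-N). lia.
  - intros [G [[HG [m Hm]] Hs]].
    assert (m <= 0).
    { destruct (Z_le_gt_dec m 0); auto. exfalso. apply Hs. rewrite Hm, Z.sgn_mul.
      rewrite (proj2 (Z.sgn_pos_iff m)) by lia. ring. }
    exists (G ++ repeat (1,k) (Z.to_nat (-m))). split.
    + apply comp_in; auto.
    + rewrite comp_app, comp_rep. rewrite Z2Nat.id by lia. lia.
  - intros [G [[HG [m Hm]] Hex]].
    assert (Hnz : forall h, In h G -> fst h <> 0).
    { intros h Hh. apply hS. unfold is_comp in HG. rewrite Forall_forall in HG. auto. }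
    destruct (last_neg G Hex Hnz) as [c1 [f [c2 [E [Hf Hc2]]]]].
    pose proof (prodA_pos _ Hc2) as Hp2.
    set (P := prodA (f :: c2)).
    assert (HP : P < 0) by (unfold P; simpl; nia).
    set (t := Z.abs m). set (s := - m - t * P).
    assert (Hs : 0 <= s) by (unfold s, t; nia).
    exists (c1 ++ repeat (1,k) (Z.to_nat t) ++ f :: c2 ++ repeat (1,k) (Z.to_nat s)).
    split.
    + subst G. unfold is_comp in *. rewrite !Forall_app in HG.
      destruct HG as [H1 H2]. inversion H2; subst.
      rewrite !Forall_app. repeat split.
      * eapply Forall_impl; [|exact H1]. simpl; auto.
      * apply Forall_forall. intros h Hh. apply repeat_spec in Hh. simpl; auto.
      * constructor. simpl; auto. apply Forall_app. split.
        -- eapply Forall_impl; [|eassumption]. simpl; auto.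
        -- apply Forall_forall. intros h Hh. apply repeat_spec in Hh. simpl; auto.
    + rewrite comp_app, comp_app, comp_rep.
      replace (f :: c2 ++ repeat (1, k) (Z.to_nat s)) with ((f :: c2) ++ repeat (1, k) (Z.to_nat s)) by reflexivity.
      rewrite comp_app, comp_rep, shift. fold P.
      subst G. rewrite comp_app in Hm.
      rewrite !Z2Nat.id by lia. unfold s in *. nia.
  - intros _ Hsg Hneg [c [Hc Hy]].
    destruct (decomp k c x) as [N [HN HP]].
    assert (Hin : inG (rm k c)).
    { split. apply rm_comp; exact Hc. exists (-N). lia. }
    assert (HN0 : 0 <= N).
    { apply HP. apply Forall_forall. intros f Hf.
      assert (fst f <> 0).
      { apply hS. pose proof (rm_comp k S c Hc) as H. unfold is_comp in H.
        rewrite Forall_forall in H. auto. }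
      pose proof (Hneg _ Hin f Hf). lia. }
    specialize (Hsg _ Hin).
    replace (comp_apply (rm k c) x - y) with (k * (- N)) in Hsg by lia.
    rewrite Z.sgn_mul in Hsg.
    destruct (Z.eq_dec N 0) as [->|HN1].
    + simpl in Hsg. rewrite Z.mul_0_r in Hsg. symmetry in Hsg.
      apply Z.sgn_null_iff in Hsg. lia.
    + rewrite (proj2 (Z.sgn_neg_iff (-N))) in Hsg by lia.
      destruct (Z_lt_le_dec k 0).
      * rewrite (proj2 (Z.sgn_neg_iff k)) in Hsg by lia. lia.
      * rewrite (proj2 (Z.sgn_pos_iff k)) in Hsg by lia. lia.
Qed.
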